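(* Let $x,y,z,a,b,c\ge 0$ be reals with $x^2+y^2+z^2=a^2+b^2+c^2$ and $x^3+y^3+z^3=a^3+b^3+c^3$. Then \[ (x,y,z,-z,-y,-x)\succ_4(a,b,c,-c,-b,-a) \] if and only if $\max(x,y,z)\ge\max(a,b,c)$.
   Context: For $u,v\in\mathbb{R}^n$, $u\succ_4 v$ means $\sum_{i=1}^n f(u_i)\ge\sum_{i=1}^n f(v_i)$ for every four times differentiable $f:\mathbb{R}\to\mathbb{R}$ with $f^{(4)}\ge 0$. *)

(* Defs.v *)
From Stdlib Require Import Reals List.
Import ListNotations.
Open Scope R_scope.

Definition four_diff_nonneg (f : R -> R) : Prop :=
  exists f1 f2 f3 f4 : R -> R,
    (forall t, derivable_pt_lim f t (f1 t)) /\
    (forall t, derivable_pt_lim f1 t (f2 t)) /\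
    (forall t, derivable_pt_lim f2 t (f3 t)) /\
    (forall t, derivable_pt_lim f3 t (f4 t)) /\
    (forall t, 0 <= f4 t).

Definition sumf (f : R -> R) (u : list R) : R :=
  fold_right (fun a acc => f a + acc) 0 u.

Definition maj4 (u v : list R) : Prop :=
  length u = length v /\
  forall f : R -> R, four_diff_nonneg f -> sumf f u >= sumf f v.

(* Main.v *)
Require Import Defs.
From Stdlib Require Import Reals List.
Import ListNotations.
Open Scope R_scope.
From Stdlib Require Import Lra Psatz.
From Coquelicot Require Import Coquelicot.
Open Scope R_scope.

Lemma deriv_cont (F : R -> R) dF s : is_derive F s dF -> continuity_pt F s.
Proof. intro H. apply is_derive_Reals in H. apply derivable_continuous_pt. exists dF; exact H. Qed.

Lemma decr_nil (g dg : R -> R) p q : p <= q ->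
  (forall s, p <= s <= q -> continuity_pt g s) ->
  (forall s, p < s < q -> is_derive g s (dg s)) ->
  (forall s, p < s < q -> dg s <= 0) -> g q <= g p.
Proof. intros Hpq Hc Hd Hn.
  destruct (Req_dec p q) as [->|Hne]; [lra|].
  assert (pr1 : forall c, p < c < q -> derivable_pt g c).
  { intros c Hc'. exists (dg c). apply is_derive_Reals. apply Hd; exact Hc'. }
  assert (pr2 : forall c, p < c < q -> derivable_pt id c).
  { intros c _. apply derivable_pt_id. }
  destruct (MVT g id p q pr1 pr2) as [c [P HM]]; try lra; auto.
  { intros; apply derivable_continuous_pt, derivable_pt_id. }
  rewrite (derive_pt_eq_0 g c (dg c) (pr1 c P)) in HM.
  2:{ apply is_derive_Reals; apply Hd; lra. }
  rewrite (derive_pt_eq_0 id c 1 (pr2 c P)) in HM.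
  2:{ apply derivable_pt_lim_id. }
  unfold id in HM. specialize (Hn c P).
  assert (0 <= (q-p)) by lra.
  assert ((q - p) * dg c <= 0) by (apply Rmult_le_0_l_compat_thing || nra).
  lra.
Qed.

Lemma decr_except (g dg : R -> R) (L : list R) :
  (forall s, continuity_pt g s) ->
  forall p q, p <= q ->
  (forall s, p < s < q -> ~ In s L -> is_derive g s (dg s)) ->
  (forall s, p < s < q -> ~ In s L -> dg s <= 0) -> g q <= g p.
Proof. intro Hc. induction L as [|r L IH]; intros p q Hpq Hd Hn.
  - apply (decr_nil g dg); [exact Hpq| intros; apply Hc | intros s Hs; apply Hd; auto | intros s Hs; apply Hn; auto].
  - destruct (Rlt_dec p r) as [H1|H1]; [destruct (Rlt_dec r q) as [H2|H2]|].
    + apply Rle_trans with (g r).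
      * apply (IH r q); try lra.
        -- intros s Hs Hi; apply Hd; [lra|]. intros [E|E]; [lra|tauto].
        -- intros s Hs Hi; apply Hn; [lra|]. intros [E|E]; [lra|tauto].
      * apply (IH p r); try lra.
        -- intros s Hs Hi; apply Hd; [lra|]. intros [E|E]; [lra|tauto].
        -- intros s Hs Hi; apply Hn; [lra|]. intros [E|E]; [lra|tauto].
    + apply (IH p q); try lra.
      -- intros s Hs Hi; apply Hd; [lra|]. intros [E|E]; [lra|tauto].
      -- intros s Hs Hi; apply Hn; [lra|]. intros [E|E]; [lra|tauto].
    + apply (IH p q); try lra.
      -- intros s Hs Hi; apply Hd; [lra|]. intros [E|E]; [lra|tauto].
      -- intros s Hs Hi; apply Hn; [lra|]. intros [E|E]; [lra|tauto].
Qed.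

Lemma incr_deriv (F dF : R -> R) p q : p <= q ->
  (forall s, is_derive F s (dF s)) -> (forall s, p <= s <= q -> 0 <= dF s) -> F p <= F q.
Proof. intros Hpq Hd Hn.
  assert (- F q <= - F p); [|lra].
  apply (decr_nil (fun s => - F s) (fun s => - dF s)); auto.
  - intros. apply (deriv_cont _ (- dF s)). apply (is_derive_opp F s (dF s)); auto.
  - intros. apply (is_derive_opp F s (dF s)); auto.
  - intros. specialize (Hn s ltac:(lra)). lra.
Qed.

Lemma gmin (p m : R) : 0 <= p -> 0 <= m -> 2*m^3 - 3*m*m^2 <= 2*p^3 - 3*m*p^2.
Proof. intros. assert (0 <= (p-m)^2*(2*p+m)) by (apply Rmult_le_pos; [apply pow2_ge_0|lra]). lra. Qed.

Lemma ginc (p q m : R) : 0 <= m -> m <= q -> q <= p -> 2*q^3 - 3*m*q^2 <= 2*p^3 - 3*m*p^2.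
Proof. intros. assert (0 <= (p-q)*((p-q)*(2*p+q) + 3*(q-m)*(p+q))).
 { apply Rmult_le_pos; [lra|]. assert (0 <= (p-q)*(2*p+q)) by (apply Rmult_le_pos; lra).
   assert (0 <= (q-m)*(p+q)) by (apply Rmult_le_pos; lra). lra. }
 lra. Qed.

Lemma ginc_strict (p q m : R) : 0 <= m -> m <= q -> q < p -> 2*q^3 - 3*m*q^2 < 2*p^3 - 3*m*p^2.
Proof. intros. assert (0 < (p-q)*((p-q)*(2*p+q) + 3*(q-m)*(p+q))).
 { apply Rmult_lt_0_compat; [lra|]. assert (0 < (p-q)*(2*p+q)) by (apply Rmult_lt_0_compat; lra).
   assert (0 <= (q-m)*(p+q)) by (apply Rmult_le_pos; lra). lra. }
 lra. Qed.

Lemma gdec_strict (p q m : R) : 0 <= p -> p < q -> q <= m -> 2*q^3 - 3*m*q^2 < 2*p^3 - 3*m*p^2.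
Proof. intros. assert (0 < (q-p)*((q-p)*(2*p+q) + 3*(m-q)*(p+q))).
 { apply Rmult_lt_0_compat; [lra|]. assert (0 < (q-p)*(2*p+q)) by (apply Rmult_lt_0_compat; lra).
   assert (0 <= (m-q)*(p+q)) by (apply Rmult_le_pos; lra). lra. }
 lra. Qed.

Lemma phi_mono (t y u1 u2 : R) : 0 <= u1 -> u1 <= u2 -> u2 <= t -> t <= y ->
  t^2*(y-u2)^3 - y^2*(t-u2)^3 <= t^2*(y-u1)^3 - y^2*(t-u1)^3.
Proof. intros.
  assert (h1: y*(t-u1) <= t*(y-u1)) by nra.
  assert (h2: y*(t-u2) <= t*(y-u2)) by nra.
  assert (0 <= y*(t-u1)) by (apply Rmult_le_pos; lra).
  assert (0 <= y*(t-u2)) by (apply Rmult_le_pos; lra).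
  assert (h11: (y*(t-u1))^2 <= (t*(y-u1))^2) by (apply pow_incr; lra).
  assert (h22: (y*(t-u2))^2 <= (t*(y-u2))^2) by (apply pow_incr; lra).
  assert (h12: (y*(t-u1))*(y*(t-u2)) <= (t*(y-u1))*(t*(y-u2))) by (apply Rmult_le_compat; lra).
  assert (0 <= (u2-u1)*( ((t*(y-u1))^2 - (y*(t-u1))^2) + ((t*(y-u1))*(t*(y-u2)) - (y*(t-u1))*(y*(t-u2))) + ((t*(y-u2))^2 - (y*(t-u2))^2))) by (apply Rmult_le_pos; lra).
  lra. Qed.

Lemma rpt (u a y z : R) : 0 <= z -> z <= y -> y <= a -> a <= u ->
  (a-y)^2*(u*(u-z)) <= (u-y)^2*(a*(a-z)).
Proof. intros.
  assert (e1: (a-y)*u <= (u-y)*a) by nra.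
  assert (e2: (a-y)*(u-z) <= (u-y)*(a-z)) by nra.
  assert (0 <= (a-y)*u) by (apply Rmult_le_pos; lra).
  assert (0 <= (a-y)*(u-z)) by (apply Rmult_le_pos; lra).
  assert (((a-y)*u)*((a-y)*(u-z)) <= ((u-y)*a)*((u-y)*(a-z))) by (apply Rmult_le_compat; lra).
  lra. Qed.

Lemma stepii (b y z : R) : 0 <= z -> z <= y -> y <= b ->
  2*(b-y)*(b*(b-z)) <= 2*b^3-3*z*b^2 - (2*y^3-3*z*y^2).
Proof. intros. assert (0 <= y*(b-y)*(y-z)) by (apply Rmult_le_pos; [apply Rmult_le_pos|]; lra).
  assert (0 <= (b-y)^2*(2*y-z)) by (apply Rmult_le_pos; [apply pow2_ge_0|lra]). lra. Qed.

Lemma stepi (x a y z : R) : 0 <= z -> z <= y -> y <= a -> a <= x ->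
  (a-y)^2*(2*x^3-3*z*x^2 - (2*a^3-3*z*a^2)) <= 2*((x-y)^3-(a-y)^3)*(a*(a-z)).
Proof. intros.
  set (F := fun u => 2*((u-y)^3-(a-y)^3)*(a*(a-z)) - (a-y)^2*(2*u^3-3*z*u^2 - (2*a^3-3*z*a^2))).
  assert (F a <= F x).
  { apply (incr_deriv F (fun u => 6*(u-y)^2*(a*(a-z)) - (a-y)^2*(6*u^2-6*z*u))); auto.
    - intro s. unfold F. auto_derive; auto. ring.
    - intros s Hs. pose proof (rpt s a y z). assert (H5: (a - y) ^ 2 * (s * (s - z)) <= (s - y) ^ 2 * (a * (a - z))) by (apply rpt; lra). lra. }
  unfold F in H3. lra.
Qed.

Definition pc (u : R) : R := if Rlt_dec 0 u then u^3 else 0.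

Lemma pc_pos u : 0 <= u -> pc u = u^3.
Proof. intros. unfold pc. destruct (Rlt_dec 0 u); [reflexivity|]. assert (u = 0) by lra. subst. ring. Qed.
Lemma pc_neg u : u <= 0 -> pc u = 0.
Proof. intros. unfold pc. destruct (Rlt_dec 0 u); [lra|reflexivity]. Qed.
Lemma pc_mono u v : u <= v -> pc u <= pc v.
Proof. intros. destruct (Rle_dec u 0).
  - rewrite (pc_neg u) by lra. destruct (Rle_dec v 0); [rewrite pc_neg by lra; lra|].
    rewrite pc_pos by lra. apply pow_le; lra.
  - rewrite !pc_pos by lra. apply pow_incr; lra. Qed.

Definition D3 x y z a b c t := pc(x-t)+pc(y-t)+pc(z-t) - (pc(a-t)+pc(b-t)+pc(c-t)).

Lemma Dy_nonneg (x y z a b c : R) : 0 <= z -> z <= y -> y <= b -> b <= a -> a <= x ->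
  0 <= c -> c <= z ->
  x^2+y^2+z^2 = a^2+b^2+c^2 -> x^3+y^3+z^3 = a^3+b^3+c^3 ->
  (b-y)^3 <= (x-y)^3-(a-y)^3.
Proof. intros.
  set (g := fun t => 2*t^3 - 3*z*t^2).
  set (U := (x-y)^3-(a-y)^3). set (V := (b-y)^3).
  set (W1 := g x - g a). set (W2 := g b - g y).
  assert (Heq : g x + g y + g z = g a + g b + g c).
  { unfold g. assert (z*(x^2+y^2+z^2) = z*(a^2+b^2+c^2)) by (rewrite H6; ring). lra. }
  assert (Hgc : g z <= g c) by (unfold g; apply gmin; lra).
  assert (HW : W2 <= W1) by (unfold W1, W2; lra).
  assert (HW2 : 0 <= W2) by (unfold W2, g; assert (hh := ginc b y z); lra).
  destruct (Req_dec b y) as [Eby|Nby].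
  - unfold U, V. rewrite Eby. replace ((y-y)^3) with 0 by ring.
    assert ((a-y)^3 <= (x-y)^3) by (apply pow_incr; lra). lra.
  - assert (hi : (a-y)^2*W1 <= 2*U*(a*(a-z))) by (unfold W1, U, g; apply stepi; lra).
    assert (hii : 2*(b-y)*(b*(b-z)) <= W2) by (unfold W2, g; apply stepii; lra).
    assert (hii' : 2*V*(b*(b-z)) <= (b-y)^2*W2).
    { unfold V. assert (0 <= (b-y)^2) by apply pow2_ge_0.
      assert ((b-y)^2*(2*(b-y)*(b*(b-z))) <= (b-y)^2*W2) by (apply Rmult_le_compat_l; lra). lra. }
    assert (e1 : (b-y)*a <= (a-y)*b) by nra.
    assert (e2 : (b-y)*(a-z) <= (a-y)*(b-z)) by nra.
    assert (hiii : ((b-y)*a)*((b-y)*(a-z)) <= ((a-y)*b)*((a-y)*(b-z))).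
    { apply Rmult_le_compat; try lra; apply Rmult_le_pos; lra. }
    assert (pa : 0 < a*(a-z)) by (apply Rmult_lt_0_compat; lra).
    assert (pb : 0 < b*(b-z)) by (apply Rmult_lt_0_compat; lra).
    (* chain: 2U ad bd >= an W1 bd >= an W2 bd >= bn W2 ad >= 2V bd ad *)
    assert (c1 : (a-y)^2*W1*(b*(b-z)) <= 2*U*(a*(a-z))*(b*(b-z))) by (apply Rmult_le_compat_r; lra).
    assert (c2 : (a-y)^2*W2*(b*(b-z)) <= (a-y)^2*W1*(b*(b-z))).
    { apply Rmult_le_compat_r; [lra|]. apply Rmult_le_compat_l; [apply pow2_ge_0|lra]. }
    assert (c3 : (b-y)^2*(a*(a-z))*W2 <= (a-y)^2*(b*(b-z))*W2).
    { apply Rmult_le_compat_r; [lra|]. lra. }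
    assert (c4 : 2*V*(b*(b-z))*(a*(a-z)) <= (b-y)^2*W2*(a*(a-z))) by (apply Rmult_le_compat_r; lra).
    assert (HF : V*((a*(a-z))*(b*(b-z))) <= U*((a*(a-z))*(b*(b-z)))) by lra.
    apply Rmult_le_reg_r in HF; [exact HF|]. apply Rmult_lt_0_compat; lra.
Qed.

Lemma pc_refl u : pc u - pc (-u) = u^3.
Proof. destruct (Rle_dec 0 u).
  - rewrite pc_pos by lra. rewrite pc_neg by lra. ring.
  - rewrite pc_neg by lra. rewrite pc_pos by lra. ring. Qed.

Lemma core_sorted (x y z a b c : R) : 0 <= z -> z <= y -> y <= x -> 0 <= c -> c <= b -> b <= a -> a <= x ->
  x^2+y^2+z^2 = a^2+b^2+c^2 -> x^3+y^3+z^3 = a^3+b^3+c^3 ->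
  forall t, 0 <= t -> 0 <= D3 x y z a b c t.
Proof. intros Hz Hzy Hyx Hc Hcb Hba Hax h2 h3 t Ht.
  assert (Hby : y <= b).
  { destruct (Rle_dec y b) as [|Hn]; [assumption|exfalso].
    assert (e : c*(x^2+y^2+z^2) = c*(a^2+b^2+c^2)) by (rewrite h2; ring).
    pose proof (ginc x a c ltac:(lra) ltac:(lra) ltac:(lra)).
    pose proof (ginc_strict y b c ltac:(lra) ltac:(lra) ltac:(lra)).
    pose proof (gmin z c ltac:(lra) ltac:(lra)). lra. }
  assert (Hcz : c <= z).
  { destruct (Rle_dec c z) as [|Hn]; [assumption|exfalso].
    assert (e : b*(x^2+y^2+z^2) = b*(a^2+b^2+c^2)) by (rewrite h2; ring).
    pose proof (ginc x a b ltac:(lra) ltac:(lra) ltac:(lra)).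
    pose proof (gmin y b ltac:(lra) ltac:(lra)).
    pose proof (gdec_strict z c b ltac:(lra) ltac:(lra) ltac:(lra)). lra. }
  pose proof (Dy_nonneg x y z a b c Hz Hzy Hby Hba Hax Hc Hcz h2 h3) as DY.
  unfold D3.
  destruct (Rle_dec b t) as [Hbt|Hbt].
  { rewrite (pc_neg (y-t)) by lra. rewrite (pc_neg (z-t)) by lra.
    rewrite (pc_neg (b-t)) by lra. rewrite (pc_neg (c-t)) by lra.
    pose proof (pc_mono (a-t) (x-t) ltac:(lra)). lra. }
  destruct (Rle_dec y t) as [Hyt|Hyt].
  { rewrite (pc_neg (y-t)) by lra. rewrite (pc_neg (z-t)) by lra.
    rewrite (pc_neg (c-t)) by lra. rewrite !pc_pos by lra.
    destruct (Req_dec b y) as [Eby|Nby].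
    { assert (t = y) by lra. subst t. lra. }
    assert (k1 : (b-t)*(x-y) <= (b-y)*(x-t)) by nra.
    assert (k2 : (b-t)*(a-y) <= (b-y)*(a-t)) by nra.
    assert (0 <= (b-t)*(x-y)) by (apply Rmult_le_pos; lra).
    assert (0 <= (b-t)*(a-y)) by (apply Rmult_le_pos; lra).
    assert (q1 : ((b-t)*(x-y))^2 <= ((b-y)*(x-t))^2) by (apply pow_incr; lra).
    assert (q2 : ((b-t)*(a-y))^2 <= ((b-y)*(a-t))^2) by (apply pow_incr; lra).
    assert (q3 : ((b-t)*(x-y))*((b-t)*(a-y)) <= ((b-y)*(x-t))*((b-y)*(a-t))) by (apply Rmult_le_compat; lra).
    assert (Q : 0 <= (x-a)*( (((b-y)*(x-t))^2 - ((b-t)*(x-y))^2) + (((b-y)*(x-t))*((b-y)*(a-t)) - ((b-t)*(x-y))*((b-t)*(a-y))) + (((b-y)*(a-t))^2 - ((b-t)*(a-y))^2))) by (apply Rmult_le_pos; lra).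
    assert (Q2 : 0 <= (b-t)^2*(b-y)^2*((b-y)-(b-t))) by (apply Rmult_le_pos; [apply Rmult_le_pos; apply pow2_ge_0|lra]).
    assert (Q3 : 0 <= (b-t)^2*((x-y)^3-(a-y)^3-(b-y)^3)) by (apply Rmult_le_pos; [apply pow2_ge_0|lra]).
    assert (HB : 0 < (b-y)^2) by (apply pow_lt; lra).
    assert (HF : 0 <= (b-y)^2 * ((x-t)^3 - (a-t)^3 - (b-t)^3)) by lra.
    apply Rmult_le_reg_l with ((b-y)^2); [exact HB|]. lra. }
  assert (E : forall s, (x-s)^3+(y-s)^3+(z-s)^3 - ((a-s)^3+(b-s)^3+(c-s)^3) = 3*s^2*(x+y+z-(a+b+c))).
  { intro s. assert (s*(x^2+y^2+z^2) = s*(a^2+b^2+c^2)) by (rewrite h2; ring). lra. }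
  pose proof (pc_refl (z-t)) as rz. pose proof (pc_refl (c-t)) as rc.
  replace (-(z-t)) with (t-z) in rz by ring. replace (-(c-t)) with (t-c) in rc by ring.
  rewrite (pc_pos (x-t)), (pc_pos (y-t)), (pc_pos (a-t)), (pc_pos (b-t)) by lra.
  assert (Dt : (x-t)^3 + (y-t)^3 + pc (z-t) - ((a-t)^3 + (b-t)^3 + pc (c-t)) = 3*t^2*(x+y+z-(a+b+c)) + pc (t-z) - pc (t-c)).
  { pose proof (E t). lra. }
  rewrite Dt.
  assert (Ey : (x-y)^3 - (a-y)^3 - (b-y)^3 = 3*y^2*(x+y+z-(a+b+c)) - (z-y)^3 + (c-y)^3).
  { pose proof (E y). replace ((y-y)^3) with 0 in H by ring. lra. }
  destruct (Req_dec t 0) as [T0|T0].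
  { subst t. rewrite !pc_neg by lra. lra. }
  assert (key : t^2*((x-y)^3 - (a-y)^3 - (b-y)^3) <= y^2*(3*t^2*(x+y+z-(a+b+c)) + pc (t-z) - pc (t-c))).
  { rewrite Ey.
    assert (R0 : t^2*(3*y^2*(x+y+z-(a+b+c))) = y^2*(3*t^2*(x+y+z-(a+b+c)))) by ring.
    assert (H: (z-y)^3 = - (y-z)^3) by ring.
    assert (H0: (c-y)^3 = - (y-c)^3) by ring.
    destruct (Rle_dec t c) as [Htc|Htc].
    { rewrite !pc_neg by lra.
      assert ((y-z)^3 <= (y-c)^3) by (apply pow_incr; lra).
      assert (0 <= t^2*((y-c)^3 - (y-z)^3)) by (apply Rmult_le_pos; [apply pow2_ge_0|lra]).
      rewrite H, H0. lra. }
    destruct (Rle_dec t z) as [Htz|Htz].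
    { rewrite (pc_neg (t-z)) by lra. rewrite (pc_pos (t-c)) by lra.
      pose proof (phi_mono t y c t ltac:(lra) ltac:(lra) ltac:(lra) ltac:(lra)).
      replace ((t-t)^3) with 0 in H1 by ring.
      assert ((y-z)^3 <= (y-t)^3) by (apply pow_incr; lra).
      assert (t^2*(y-z)^3 <= t^2*(y-t)^3) by (apply Rmult_le_compat_l; [apply pow2_ge_0|lra]).
      rewrite H, H0. lra. }
    rewrite (pc_pos (t-z)) by lra. rewrite (pc_pos (t-c)) by lra.
    pose proof (phi_mono t y c z ltac:(lra) ltac:(lra) ltac:(lra) ltac:(lra)).
    rewrite H, H0. lra. }
  assert (HB : 0 < y^2) by (apply pow_lt; lra).
  assert (0 <= t^2*((x-y)^3 - (a-y)^3 - (b-y)^3)) by (apply Rmult_le_pos; [apply pow2_ge_0|lra]).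
  apply Rmult_le_reg_l with (y^2); [exact HB|]. lra.
Qed.

Lemma core_a (x y z a b c : R) : 0 <= z -> z <= y -> y <= x -> 0 <= a -> 0 <= b -> 0 <= c ->
  a <= x -> b <= x -> c <= x ->
  x^2+y^2+z^2 = a^2+b^2+c^2 -> x^3+y^3+z^3 = a^3+b^3+c^3 ->
  forall t, 0 <= t -> 0 <= D3 x y z a b c t.
Proof. intros. unfold D3.
  destruct (Rle_dec b a); destruct (Rle_dec c b); destruct (Rle_dec c a).
  all: first
   [ pose proof (core_sorted x y z a b c ltac:(lra) ltac:(lra) ltac:(lra) ltac:(lra) ltac:(lra) ltac:(lra) ltac:(lra) ltac:(lra) ltac:(lra) t H10) as K
   | pose proof (core_sorted x y z a c b ltac:(lra) ltac:(lra) ltac:(lra) ltac:(lra) ltac:(lra) ltac:(lra) ltac:(lra) ltac:(lra) ltac:(lra) t H10) as K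
   | pose proof (core_sorted x y z b a c ltac:(lra) ltac:(lra) ltac:(lra) ltac:(lra) ltac:(lra) ltac:(lra) ltac:(lra) ltac:(lra) ltac:(lra) t H10) as K
   | pose proof (core_sorted x y z b c a ltac:(lra) ltac:(lra) ltac:(lra) ltac:(lra) ltac:(lra) ltac:(lra) ltac:(lra) ltac:(lra) ltac:(lra) t H10) as K
   | pose proof (core_sorted x y z c a b ltac:(lra) ltac:(lra) ltac:(lra) ltac:(lra) ltac:(lra) ltac:(lra) ltac:(lra) ltac:(lra) ltac:(lra) t H10) as K
   | pose proof (core_sorted x y z c b a ltac:(lra) ltac:(lra) ltac:(lra) ltac:(lra) ltac:(lra) ltac:(lra) ltac:(lra) ltac:(lra) ltac:(lra) t H10) as K ];
   unfold D3 in K; lra.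
Qed.

Lemma core_gen (x y z a b c : R) : 0 <= x -> 0 <= y -> 0 <= z -> 0 <= a -> 0 <= b -> 0 <= c ->
  x^2+y^2+z^2 = a^2+b^2+c^2 -> x^3+y^3+z^3 = a^3+b^3+c^3 ->
  Rmax x (Rmax y z) >= Rmax a (Rmax b c) ->
  forall t, 0 <= t -> 0 <= D3 x y z a b c t.
Proof. intros Hx Hy Hz Ha Hb Hc h2 h3 HM t Ht.
  assert (Ma : a <= Rmax x (Rmax y z)) by (pose proof (Rmax_l a (Rmax b c)); lra).
  assert (Mb : b <= Rmax x (Rmax y z)) by (pose proof (Rmax_l b c); pose proof (Rmax_r a (Rmax b c)); lra).
  assert (Mc : c <= Rmax x (Rmax y z)) by (pose proof (Rmax_r b c); pose proof (Rmax_r a (Rmax b c)); lra).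
  clear HM. unfold D3.
  destruct (Rle_dec y x); destruct (Rle_dec z y); destruct (Rle_dec z x).
  all: repeat first [rewrite (Rmax_left y z) in * by lra | rewrite (Rmax_right y z) in * by lra
          | rewrite (Rmax_left x y) in * by lra | rewrite (Rmax_right x y) in * by lra
          | rewrite (Rmax_left x z) in * by lra | rewrite (Rmax_right x z) in * by lra ].
  all: first
   [ pose proof (core_a x y z a b c ltac:(lra) ltac:(lra) ltac:(lra) Ha Hb Hc ltac:(lra) ltac:(lra) ltac:(lra) ltac:(lra) ltac:(lra) t Ht) as K
   | pose proof (core_a x z y a b c ltac:(lra) ltac:(lra) ltac:(lra) Ha Hb Hc ltac:(lra) ltac:(lra) ltac:(lra) ltac:(lra) ltac:(lra) t Ht) as K
   | pose proof (core_a y x z a b c ltac:(lra) ltac:(lra) ltac:(lra) Ha Hb Hc ltac:(lra) ltac:(lra) ltac:(lra) ltac:(lra) ltac:(lra) t Ht) as K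
   | pose proof (core_a y z x a b c ltac:(lra) ltac:(lra) ltac:(lra) Ha Hb Hc ltac:(lra) ltac:(lra) ltac:(lra) ltac:(lra) ltac:(lra) t Ht) as K
   | pose proof (core_a z x y a b c ltac:(lra) ltac:(lra) ltac:(lra) Ha Hb Hc ltac:(lra) ltac:(lra) ltac:(lra) ltac:(lra) ltac:(lra) t Ht) as K
   | pose proof (core_a z y x a b c ltac:(lra) ltac:(lra) ltac:(lra) Ha Hb Hc ltac:(lra) ltac:(lra) ltac:(lra) ltac:(lra) ltac:(lra) t Ht) as K ];
   unfold D3 in K; lra.
Qed.

Definition Rf (f f1 f2 f3 : R -> R) (w s : R) : R :=
  f w - f s - f1 s*(w-s) - f2 s*(w-s)^2/2 - f3 s*(w-s)^3/6.
Definition Pf (f f1 f2 f3 : R -> R) (w s : R) : R :=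
  if Rlt_dec s w then Rf f f1 f2 f3 w s else 0.
Definition dPf (f4 : R -> R) (w s : R) : R := - f4 s * pc (w - s) / 6.


Lemma Rf_deriv (f f1 f2 f3 f4 : R -> R) (w s0 : R) :
  (forall t, is_derive f t (f1 t)) -> (forall t, is_derive f1 t (f2 t)) ->
  (forall t, is_derive f2 t (f3 t)) -> (forall t, is_derive f3 t (f4 t)) ->
  is_derive (Rf f f1 f2 f3 w) s0 (- f4 s0 * (w - s0)^3 / 6).
Proof. intros H1 H2 H3 H4. unfold Rf. auto_derive.
  - repeat split; [exists (f1 s0)|exists (f2 s0)|exists (f3 s0)|exists (f4 s0)]; auto.
  - replace (Derive (fun x => f x) s0) with (f1 s0) by (symmetry; apply is_derive_unique; apply H1).
    replace (Derive (fun x => f1 x) s0) with (f2 s0) by (symmetry; apply is_derive_unique; apply H2).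
    replace (Derive (fun x => f2 x) s0) with (f3 s0) by (symmetry; apply is_derive_unique; apply H3).
    replace (Derive (fun x => f3 x) s0) with (f4 s0) by (symmetry; apply is_derive_unique; apply H4).
    field.
Qed.

Lemma P_deriv (f f1 f2 f3 f4 : R -> R) (w s0 : R) :
  (forall t, is_derive f t (f1 t)) -> (forall t, is_derive f1 t (f2 t)) ->
  (forall t, is_derive f2 t (f3 t)) -> (forall t, is_derive f3 t (f4 t)) ->
  s0 <> w -> is_derive (Pf f f1 f2 f3 w) s0 (dPf f4 w s0).
Proof. intros H1 H2 H3 H4 Hne. unfold dPf.
  destruct (Rlt_dec s0 w) as [Hl|Hl].
  - rewrite pc_pos by lra.
    apply is_derive_ext_loc with (Rf f f1 f2 f3 w).
    + apply filter_imp with (fun u => u < w).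
      * intros u Hu. unfold Pf. destruct (Rlt_dec u w); [reflexivity|lra].
      * apply (open_lt w s0 Hl).
    + replace (- f4 s0 * (w - s0) ^ 3 / 6) with (- f4 s0 * (w - s0) ^ 3 / 6) by ring.
      apply Rf_deriv; auto.
  - rewrite pc_neg by lra.
    apply is_derive_ext_loc with (fun _ => 0).
    + apply filter_imp with (fun u => w < u).
      * intros u Hu. unfold Pf. destruct (Rlt_dec u w); [lra|reflexivity].
      * apply (open_gt w s0). lra.
    + replace (- f4 s0 * 0 / 6) with 0 by field. auto_derive; auto.
Qed.

Lemma P_cont (f f1 f2 f3 f4 : R -> R) (w s0 : R) :
  (forall t, is_derive f t (f1 t)) -> (forall t, is_derive f1 t (f2 t)) ->
  (forall t, is_derive f2 t (f3 t)) -> (forall t, is_derive f3 t (f4 t)) ->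
  continuity_pt (Pf f f1 f2 f3 w) s0.
Proof. intros H1 H2 H3 H4.
  assert (HR : continuity_pt (Rf f f1 f2 f3 w) s0).
  { apply (deriv_cont _ (- f4 s0 * (w - s0)^3 / 6)). apply Rf_deriv; auto. }
  apply continuity_pt_locally. intro eps.
  apply continuity_pt_locally with (eps := eps) in HR.
  destruct (Rlt_dec s0 w) as [Hl|Hl].
  - generalize (filter_and _ _ HR (open_lt w s0 Hl)). apply filter_imp.
    intros u [Hu1 Hu2]. unfold Pf. destruct (Rlt_dec u w); [|lra].
    destruct (Rlt_dec s0 w); [exact Hu1|lra].
  - destruct (Req_dec s0 w) as [E|E].
    + subst s0. generalize HR. apply filter_imp. intros u Hu. unfold Pf.
      destruct (Rlt_dec w w); [lra|].
      assert (Rf f f1 f2 f3 w w = 0). { unfold Rf. field. }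
      rewrite H in Hu. destruct (Rlt_dec u w).
      * exact Hu.
      * rewrite Rminus_0_r, Rabs_R0. destruct eps; simpl; lra.
    + generalize (open_gt w s0 ltac:(lra)). apply filter_imp. intros u Hu. unfold Pf.
      destruct (Rlt_dec u w); [lra|]. destruct (Rlt_dec s0 w); [lra|].
      rewrite Rminus_0_r, Rabs_R0. destruct eps; simpl; lra.
Qed.

Definition sP (f f1 f2 f3 : R -> R) (l : list R) (s : R) : R :=
  fold_right (fun w acc => Pf f f1 f2 f3 w s + acc) 0 l.
Definition sdP (f4 : R -> R) (l : list R) (s : R) : R :=
  fold_right (fun w acc => dPf f4 w s + acc) 0 l.

Lemma sP_deriv (f f1 f2 f3 f4 : R -> R) (l : list R) (s0 : R) :
  (forall t, is_derive f t (f1 t)) -> (forall t, is_derive f1 t (f2 t)) ->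
  (forall t, is_derive f2 t (f3 t)) -> (forall t, is_derive f3 t (f4 t)) ->
  ~ In s0 l -> is_derive (sP f f1 f2 f3 l) s0 (sdP f4 l s0).
Proof. intros H1 H2 H3 H4. induction l as [|w l IH]; intro Hn.
  - unfold sP, sdP; simpl. auto_derive; auto.
  - unfold sP, sdP; simpl.
    apply (is_derive_plus (Pf f f1 f2 f3 w) (sP f f1 f2 f3 l)).
    + apply P_deriv; auto. intro E; apply Hn; left; auto.
    + apply IH. intro E; apply Hn; right; auto.
Qed.

Lemma sP_cont (f f1 f2 f3 f4 : R -> R) (l : list R) (s0 : R) :
  (forall t, is_derive f t (f1 t)) -> (forall t, is_derive f1 t (f2 t)) ->
  (forall t, is_derive f2 t (f3 t)) -> (forall t, is_derive f3 t (f4 t)) ->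
  continuity_pt (sP f f1 f2 f3 l) s0.
Proof. intros H1 H2 H3 H4. induction l as [|w l IH].
  - unfold sP; simpl. apply continuity_pt_const. intros u v; reflexivity.
  - unfold sP; simpl.
    apply (continuity_pt_plus (Pf f f1 f2 f3 w) (sP f f1 f2 f3 l)).
    + apply (P_cont f f1 f2 f3 f4); auto.
    + apply IH.
Qed.

Lemma Pf_ge f f1 f2 f3 w s : w <= s -> Pf f f1 f2 f3 w s = 0.
Proof. intros. unfold Pf. destruct (Rlt_dec s w); [lra|reflexivity]. Qed.
Lemma Pf_lt f f1 f2 f3 w s : s < w -> Pf f f1 f2 f3 w s = Rf f f1 f2 f3 w s.
Proof. intros. unfold Pf. destruct (Rlt_dec s w); [reflexivity|lra]. Qed.

Lemma K_nonneg (x y z a b c : R) : 0 <= x -> 0 <= y -> 0 <= z -> 0 <= a -> 0 <= b -> 0 <= c ->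
  x^2+y^2+z^2 = a^2+b^2+c^2 -> x^3+y^3+z^3 = a^3+b^3+c^3 ->
  Rmax x (Rmax y z) >= Rmax a (Rmax b c) -> forall s,
  0 <= pc(x-s)+pc(y-s)+pc(z-s)+pc(-z-s)+pc(-y-s)+pc(-x-s)
       - (pc(a-s)+pc(b-s)+pc(c-s)+pc(-c-s)+pc(-b-s)+pc(-a-s)).
Proof. intros Hx Hy Hz Ha Hb Hc h2 h3 HM s.
  destruct (Rle_dec 0 s).
  - pose proof (core_gen x y z a b c Hx Hy Hz Ha Hb Hc h2 h3 HM s r) as K. unfold D3 in K.
    rewrite (pc_neg (-z-s)), (pc_neg (-y-s)), (pc_neg (-x-s)), (pc_neg (-c-s)), (pc_neg (-b-s)), (pc_neg (-a-s)) by lra.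
    lra.
  - pose proof (core_gen x y z a b c Hx Hy Hz Ha Hb Hc h2 h3 HM (-s) ltac:(lra)) as K. unfold D3 in K.
    replace (x - - s) with (x + s) in K by ring. replace (y - - s) with (y + s) in K by ring.
    replace (z - - s) with (z + s) in K by ring. replace (a - - s) with (a + s) in K by ring.
    replace (b - - s) with (b + s) in K by ring. replace (c - - s) with (c + s) in K by ring.
    pose proof (pc_refl (-x-s)) as rx. pose proof (pc_refl (-y-s)) as ry. pose proof (pc_refl (-z-s)) as rz.
    pose proof (pc_refl (-a-s)) as ra. pose proof (pc_refl (-b-s)) as rb. pose proof (pc_refl (-c-s)) as rc.
    replace (- (-x-s)) with (x+s) in rx by ring. replace (- (-y-s)) with (y+s) in ry by ring.
    replace (- (-z-s)) with (z+s) in rz by ring. replace (- (-a-s)) with (a+s) in ra by ring.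
    replace (- (-b-s)) with (b+s) in rb by ring. replace (- (-c-s)) with (c+s) in rc by ring.
    rewrite (pc_pos (x-s)), (pc_pos (y-s)), (pc_pos (z-s)), (pc_pos (a-s)), (pc_pos (b-s)), (pc_pos (c-s)) by lra.
    assert (s*(x^2+y^2+z^2) = s*(a^2+b^2+c^2)) by (rewrite h2; ring).
    lra.
Qed.

Lemma dir_pos (x y z a b c : R) : 0 <= x -> 0 <= y -> 0 <= z -> 0 <= a -> 0 <= b -> 0 <= c ->
  x^2+y^2+z^2 = a^2+b^2+c^2 -> x^3+y^3+z^3 = a^3+b^3+c^3 ->
  Rmax x (Rmax y z) >= Rmax a (Rmax b c) -> forall f, four_diff_nonneg f ->
  sumf f [x; y; z; - z; - y; - x] >= sumf f [a; b; c; - c; - b; - a].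
Proof. intros Hx Hy Hz Ha Hb Hc h2 h3 HM f [f1 [f2 [f3 [f4 [D1 [D2 [D3' [D4 P4]]]]]]]].
  assert (H1 : forall t, is_derive f t (f1 t)) by (intro; apply is_derive_Reals; auto).
  assert (H2 : forall t, is_derive f1 t (f2 t)) by (intro; apply is_derive_Reals; auto).
  assert (H3 : forall t, is_derive f2 t (f3 t)) by (intro; apply is_derive_Reals; auto).
  assert (H4 : forall t, is_derive f3 t (f4 t)) by (intro; apply is_derive_Reals; auto).
  set (U := [x; y; z; - z; - y; - x]). set (V := [a; b; c; - c; - b; - a]).
  set (Psi := fun s => sP f f1 f2 f3 U s - sP f f1 f2 f3 V s).
  set (dPsi := fun s => sdP f4 U s - sdP f4 V s).
  set (M := x+y+z+a+b+c).
  assert (HD : Psi (M+1) <= Psi (-M-1)).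
  { apply (decr_except Psi dPsi (U ++ V)).
    - intro s. unfold Psi. apply continuity_pt_minus; apply (sP_cont f f1 f2 f3 f4); auto.
    - unfold M; lra.
    - intros s _ Hn. unfold Psi, dPsi.
      apply (is_derive_minus (sP f f1 f2 f3 U) (sP f f1 f2 f3 V)); apply sP_deriv; auto;
        intro E; apply Hn; apply in_or_app; auto.
    - intros s _ _. unfold dPsi, sdP, dPf, U, V; simpl.
      pose proof (K_nonneg x y z a b c Hx Hy Hz Ha Hb Hc h2 h3 HM s) as K.
      assert (0 <= f4 s) by auto.
      assert (0 <= f4 s * (pc(x-s)+pc(y-s)+pc(z-s)+pc(-z-s)+pc(-y-s)+pc(-x-s)
       - (pc(a-s)+pc(b-s)+pc(c-s)+pc(-c-s)+pc(-b-s)+pc(-a-s)))) by (apply Rmult_le_pos; auto).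
      lra. }
  unfold Psi, sP, U, V in HD; simpl in HD.
  rewrite !(Pf_ge f f1 f2 f3 _ (M+1)) in HD by (unfold M; lra).
  rewrite !(Pf_lt f f1 f2 f3 _ (-M-1)) in HD by (unfold M; lra).
  unfold Rf in HD. unfold sumf; simpl.
  set (p := -M-1) in *.
  assert (f2 p * (x^2+y^2+z^2) = f2 p * (a^2+b^2+c^2)) by (rewrite h2; ring).
  assert (f3 p * p * (x^2+y^2+z^2) = f3 p * p * (a^2+b^2+c^2)) by (rewrite h2; ring).
  lra.
Qed.

Lemma exp_fdn (k : R) : four_diff_nonneg (fun t => exp (k*t)).
Proof. exists (fun t => k*exp(k*t)), (fun t => k^2*exp(k*t)), (fun t => k^3*exp(k*t)), (fun t => k^4*exp(k*t)).
  repeat split; try (intro t; apply is_derive_Reals; auto_derive; auto; ring).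
  intro t. apply Rmult_le_pos; [|left; apply exp_pos].
  replace (k^4) with ((k^2)^2) by ring. apply pow2_ge_0.
Qed.

Lemma dir_neg (x y z a b c : R) : 0 <= x -> 0 <= y -> 0 <= z -> 0 <= a -> 0 <= b -> 0 <= c ->
  (forall f, four_diff_nonneg f -> sumf f [x; y; z; - z; - y; - x] >= sumf f [a; b; c; - c; - b; - a]) ->
  Rmax x (Rmax y z) >= Rmax a (Rmax b c).
Proof. intros Hx Hy Hz Ha Hb Hc H.
  set (M := Rmax x (Rmax y z)). set (A := Rmax a (Rmax b c)).
  destruct (Rge_dec M A) as [|Hlt]; [assumption|exfalso].
  assert (HMA : M < A) by lra.
  assert (xM : x <= M) by apply Rmax_l.
  assert (yM : y <= M) by (unfold M; pose proof (Rmax_l y z); pose proof (Rmax_r x (Rmax y z)); lra).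
  assert (zM : z <= M) by (unfold M; pose proof (Rmax_r y z); pose proof (Rmax_r x (Rmax y z)); lra).
  set (k := 6 / (A - M)).
  assert (kpos : 0 < k) by (unfold k; apply Rdiv_lt_0_compat; lra).
  specialize (H _ (exp_fdn k)). unfold sumf in H; simpl in H.
  assert (le : forall u, u <= M -> exp (k*u) <= exp (k*M)).
  { intros u Hu. destruct (Req_dec u M) as [->|Hne]; [lra|]. left. apply exp_increasing.
    apply Rmult_lt_compat_l; lra. }
  pose proof (le x xM). pose proof (le y yM). pose proof (le z zM).
  pose proof (le (-x) ltac:(lra)). pose proof (le (-y) ltac:(lra)). pose proof (le (-z) ltac:(lra)).
  assert (HA : exp (k*A) <= exp (k*a) + exp (k*b) + exp (k*c)).
  { pose proof (exp_pos (k*a)). pose proof (exp_pos (k*b)). pose proof (exp_pos (k*c)).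
    unfold A. apply Rmax_case; [lra|]. apply Rmax_case; lra. }
  assert (E : exp (k*A) = exp (k*M) * exp 6).
  { rewrite <- exp_plus. f_equal. unfold k. field. lra. }
  assert (E6 : 1 + 6 < exp 6) by (apply exp_ineq1; lra).
  pose proof (exp_pos (k*M)).
  assert (7 * exp (k*M) < exp (k*M) * exp 6) by nra.
  pose proof (exp_pos (k * - c)). pose proof (exp_pos (k * - b)). pose proof (exp_pos (k * - a)).
  lra.
Qed.

Theorem mainTheorem20 (x y z a b c : R)
  (hx : 0 <= x) (hy : 0 <= y) (hz : 0 <= z)
  (ha : 0 <= a) (hb : 0 <= b) (hc : 0 <= c)
  (h2 : x ^ 2 + y ^ 2 + z ^ 2 = a ^ 2 + b ^ 2 + c ^ 2)
  (h3 : x ^ 3 + y ^ 3 + z ^ 3 = a ^ 3 + b ^ 3 + c ^ 3) :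
  maj4 [x; y; z; - z; - y; - x] [a; b; c; - c; - b; - a]
  <-> Rmax x (Rmax y z) >= Rmax a (Rmax b c).
Proof. split.
  - intros [_ H]. apply dir_neg; auto.
  - intro HM. split; [reflexivity|]. apply dir_pos; auto.
Qed.
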